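(* Let $F$ be a bijection of $\mathbb F_2^m$ with $F(0)=0$. Then $F$ is APN if and only if $v_F(a)=2^{m-1}$ for all $a\in\mathbb F_2^m\setminus\{0\}$.
   Context: $F:\mathbb F_2^m\to\mathbb F_2^m$ with $F(0)=0$ is APN (almost perfect nonlinear) if for all $a,b\in\mathbb F_2^m$ with $b\ne 0$ the equation $F(x)+F(x+b)=a$ has at most two solutions $x\in\mathbb F_2^m$. For nonzero $a$, $v_F(a)=|\{x+F^{-1}(a+F(x)) : x\in\mathbb F_2^m\}|$. *)

(* Defs.v *)
From HB Require Import structures.
From mathcomp Require Import all_boot all_order all_algebra.
Set Implicit Arguments. Unset Strict Implicit. Unset Printing Implicit Defensive.
Import GRing.Theory.
Local Open Scope ring_scope.

Notation vecF2 m := 'rV['F_2]_m.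

Definition APN (m : nat) (F : vecF2 m -> vecF2 m) : Prop :=
  forall a b : vecF2 m, b != 0 ->
    (#|[set x : vecF2 m | (F x + F (x + b))%R == a]| <= 2)%N.

(* v_F(a) = |{ x + F^{-1}(a + F x) : x }|.  For bijective F, the element
   F^{-1}(a + F x) is the unique y with F y = a + F x. *)
Definition vF (m : nat) (F : vecF2 m -> vecF2 m) (a : vecF2 m) : nat :=
  #|[set (p.1 + p.2)%R | p in [set p : vecF2 m * vecF2 m | F p.2 == (a + F p.1)%R]]|.

(* Main.v *)
Require Import Defs.
From mathcomp Require Import all_boot all_order all_algebra.
From mathcomp Require Import zify.
Local Open Scope ring_scope.
Import GRing.Theory.
Set Implicit Arguments. Unset Strict Implicit.
Lemma addvv m (v : 'rV['F_2]_m) : v + v = 0.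
Proof. apply/rowP => i; rewrite !mxE; exact: (addrr_pchar2 (pchar_Fp _)). Qed.
Lemma addvK m (u v : 'rV['F_2]_m) : u + (u + v) = v.
Proof. by rewrite addrA addvv add0r. Qed.
Lemma cardT m : #|'rV['F_2]_m| = (2 ^ m)%N.
Proof. by rewrite card_mx card_Fp // mul1n. Qed.

Definition NA m (F : 'rV['F_2]_m -> 'rV['F_2]_m) a b :=
  [set x : 'rV['F_2]_m | (F x + F (x + b))%R == a].

Lemma vF_eq m (F : 'rV['F_2]_m -> 'rV['F_2]_m) a :
  vF F a = #|[set b : 'rV['F_2]_m | NA F a b != set0]|.
Proof.
rewrite /vF; apply: eq_card => b; rewrite [in RHS]inE.
apply/imsetP/set0Pn.
- case=> [[x y]]; rewrite inE /= => /eqP Hy ->; exists x.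
  by rewrite inE (addvK x y) Hy addrC -addrA (addvv (F x)) addr0.
- case=> x; rewrite inE => /eqP H; exists (x, x + b); last by rewrite addvK.
  by rewrite inE /=; apply/eqP; rewrite -H [_ + F x]addrC (addvK (F x) (F (x + b))).
Qed.

Lemma sumNA m (F : 'rV['F_2]_m -> 'rV['F_2]_m) G a :
  cancel F G -> cancel G F ->
  (\sum_b #|NA F a b| = 2 ^ m)%N.
Proof.
move=> FK GK; rewrite -cardT -[in RHS]sum1_card.
rewrite [in RHS](partition_big (fun x => x + G (a + F x)) predT) //=.
apply: eq_bigr => b _; rewrite -sum1_card; apply: eq_bigl => x.
rewrite inE; apply/eqP/eqP => H.
- by rewrite -H [_ + F x]addrC (addvK (F x) (F (x + b))) FK (addvK x b).
- by rewrite -H (addvK x (G (a + F x))) GK [a + _]addrC (addvK (F x) a).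
Qed.

Lemma NA0 m (F : 'rV['F_2]_m -> 'rV['F_2]_m) a : a != 0 -> NA F a 0 = set0.
Proof.
move=> a0; apply/setP => x; rewrite !inE addr0 addvv.
by apply/negP => /eqP H; move: a0; rewrite -H eqxx.
Qed.

Lemma NA_a0 m (F : 'rV['F_2]_m -> 'rV['F_2]_m) b :
  injective F -> b != 0 -> NA F 0 b = set0.
Proof.
move=> Fi b0; apply/setP => x; rewrite !inE; apply/negP => /eqP H.
have: F x = F (x + b) by rewrite -[F (x + b)]add0r -H -addrA (addvv (F (x + b))) addr0.
by move/Fi => E; move: b0; rewrite -(addvK x b) -E (addvv x) eqxx.
Qed.

Lemma NA_ge2 m (F : 'rV['F_2]_m -> 'rV['F_2]_m) a b :
  NA F a b != set0 -> b != 0 -> (2 <= #|NA F a b|)%N.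
Proof.
case/set0Pn=> x Hx b0.
have Hy : x + b \in NA F a b.
  by move: Hx; rewrite !inE -addrA addvv addr0 addrC.
have : x != x + b.
  apply/negP => /eqP H; move: b0; rewrite -(addvK x b) -H addvv eqxx //.
move=> ne.
by rewrite (cardsD1 x) Hx (cardsD1 (x+b)) in_setD1 eq_sym ne Hy.
Qed.

Lemma sumS m (F : 'rV['F_2]_m -> 'rV['F_2]_m) G a :
  cancel F G -> cancel G F ->
  (\sum_(b in [set b : 'rV['F_2]_m | NA F a b != set0]) #|NA F a b| = 2 ^ m)%N.
Proof.
move=> FK GK; rewrite -(sumNA a FK GK).
rewrite [in RHS](bigID (mem [set b : 'rV['F_2]_m | NA F a b != set0])) /=.
rewrite [X in _ = (_ + X)%N]big1 ?addn0 // => b; rewrite inE negbK => /eqP ->.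
by rewrite cards0.
Qed.

Theorem mainTheorem10 (m : nat) (F : 'rV['F_2]_m -> 'rV['F_2]_m) :
  bijective F -> F 0 = 0 ->
  (APN F <-> (forall a : 'rV['F_2]_m, a != 0 -> vF F a = (2 ^ (m - 1))%N)).
Proof.
case=> G FK GK F0.
have Fi : injective F := can_inj FK.
have m0 : forall a : 'rV['F_2]_m, a != 0 -> (2 ^ m = 2 * 2 ^ (m - 1))%N.
  case: m {F G FK GK F0 Fi} => [|n] a.
    by rewrite thinmx0 eqxx.
  by rewrite subn1 /= expnS.
split.
- move=> H a a0; rewrite vF_eq.
  have := sumS a FK GK.
  rewrite (eq_bigr (fun _ => 2%N)); last first.
    move=> b; rewrite inE => ne.
    have b0 : b != 0 by apply: contraNneq ne => ->; rewrite NA0.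
    apply/eqP; rewrite eqn_leq (NA_ge2 ne b0) andbT; exact: H.
  rewrite sum_nat_const (m0 a a0) => E.
  by rewrite muln2 -mul2n in E; apply/eqP; rewrite -(eqn_pmul2l (isT : 0 < 2)%N); apply/eqP.
- move=> H a b b0; rewrite -/(NA F a b).
  have [->|a0] := eqVneq a 0; first by rewrite NA_a0 // cards0.
  have [e|ne] := eqVneq (NA F a b) set0; first by rewrite e cards0.
  have E := sumS a FK GK; have V := H a a0; rewrite vF_eq in V.
  have bS : b \in [set b : 'rV['F_2]_m | NA F a b != set0] by rewrite inE ne.
  have E2 : (\sum_(c in [set b : 'rV['F_2]_m | NA F a b != set0]) 2 = 2 ^ m)%N.
    by rewrite sum_nat_const V (m0 a a0) mulnC.
  rewrite (bigD1 b) //= in E; rewrite (bigD1 b) //= in E2.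
  have L : (\sum_(i in [set b : 'rV['F_2]_m | NA F a b != set0] | i != b) 2 <=
            \sum_(i in [set b : 'rV['F_2]_m | NA F a b != set0] | i != b) #|NA F a i|)%N.
    apply: leq_sum => c /andP [cS cb]; apply: NA_ge2; first by move: cS; rewrite inE.
    by move: cS; rewrite inE; apply: contraNneq => ->; rewrite NA0 ?eqxx.
  by rewrite -(leq_add2l 2) E2 -E leq_add2r in L.
Qed.
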